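(* Let $C$ be an $A$-code of length $2$ with canonical generator matrix $\begin{pmatrix}g_1&g_2\\0&g_3\end{pmatrix}$, where $g_1,g_3$ are nonzero monic divisors of $f$ in $\mathbb{F}[x]$, $g_3$ divides $(f/g_1)g_2$, and $\deg g_2<\deg g_3$. Then the following are equivalent: (i) $C$ is self-dual, i.e. $C=C^\perp$; (ii) $\deg g_1+\deg g_3=m$, $g_3^2=g_2g_3=g_1^2+g_2^2=0$ in $A$, and $g_1^2\mid f$ in $\mathbb{F}[x]$; (iii) there exist $g',f',r\in\mathbb{F}[x]$ with $g'^2=rf'-1$ such that $f=g_1^2f'$, $g_3=g_1f'$ and $g_2=g_1g'$.
   Context: Let $\mathbb{F}$ be a finite field, $f(x)\in\mathbb{F}[x]$ monic of degree $m$, $A=\mathbb{F}[x]/\langle f(x)\rangle$, elements identified with polynomials of degree $<m$. An $A$-code of length $l$ is an $A$-submodule of $A^l$; $C^\perp=\{a\in A^l:\sum_ia_ic_i=0\ \forall c\in C\}$. The canonical generator matrix (CGM) of a nonzero $A$-code $C$ is the unique matrix over $A$ whose rows generate $C$, are monic with strictly increasing leading indices (position of first nonzero entry), have leading entries dividing $f$, satisfy that $(f/L_i)\cdot(\text{row }i)$ is an $A$-combination of later rows ($L_i$ the leading entry of row $i$), and such that every entry above a leading entry has smaller degree than it. *)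

(* Defs.v *)
(* A = F[x]/<f>, elements represented by polynomials of size < size f. *)
From mathcomp Require Import all_boot all_order all_algebra.
Set Implicit Arguments. Unset Strict Implicit. Unset Printing Implicit Defensive.
Import GRing.Theory.
Local Open Scope ring_scope.

Section Codes.
Variable F : finFieldType.

Definition inA (f a : {poly F}) : Prop := (size a < size f)%N.

Definition code2 (f g1 g2 g3 : {poly F}) (c : {poly F} * {poly F}) : Prop :=
  inA f c.1 /\ inA f c.2 /\
  exists u v : {poly F}, c.1 = (u * g1) %% f /\ c.2 = (u * g2 + v * g3) %% f.

Definition dual2 (f : {poly F}) (C : {poly F} * {poly F} -> Prop)
    (a : {poly F} * {poly F}) : Prop :=
  inA f a.1 /\ inA f a.2 /\
  forall c, C c -> (a.1 * c.1 + a.2 * c.2) %% f = 0.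

Definition self_dual2 (f : {poly F}) (C : {poly F} * {poly F} -> Prop) : Prop :=
  forall a, C a <-> dual2 f C a.

End Codes.

(* Main.v *)
Require Import Defs.
From mathcomp Require Import all_boot all_order all_algebra.
From mathcomp Require Import ring zify.
Import GRing.Theory.
Local Open Scope ring_scope.

Section H.
Variable F : fieldType.
Implicit Types a b f x y : {poly F}.

Lemma sq_dvd a b : a != 0 -> a ^+ 2 %| b ^+ 2 -> a %| b.
Proof.
move=> a0 H.
set d := gcdp a b.
have d0 : d != 0 by rewrite gcdp_eq0 negb_and a0.
have cop : coprimep (a %/ d) (b %/ d) by apply: coprimep_div_gcd; rewrite a0.
have Ea : a = (a %/ d) * d by rewrite divpK // dvdp_gcdl.
have Eb : b = (b %/ d) * d by rewrite divpK // dvdp_gcdr.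
have H' : (a %/ d)^+2 %| (b %/ d)^+2.
  by rewrite -(dvdp_mul2r _ _ (expf_neq0 2 d0)) -!exprMn -Ea -Eb.
have : a %/ d %| 1 * (b %/ d) ^+ 2 by rewrite mul1r (dvdp_trans _ H') // expr2 dvdp_mulr.
rewrite Gauss_dvdpl; last exact: coprimep_expr.
move=> H2; rewrite Ea (dvdp_trans (dvdp_mul H2 (dvdpp d))) // mul1r dvdp_gcdr //.
Qed.

Lemma modpMm f x y : ((x %% f) * (y %% f)) %% f = (x * y) %% f.
Proof. by rewrite modp_mul mulrC modp_mul mulrC. Qed.

Lemma eqmod f x y : (x %% f = y %% f) -> f %| x - y.
Proof. by move=> H; apply/modp_eq0P; rewrite modpD modpN H subrr. Qed.

Lemma dvd_modE f x : f %| x -> x %% f = 0.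
Proof. by move/modp_eq0P. Qed.

Lemma core f g1 g2 g3 f' : g1 != 0 -> f = g1 ^+ 2 * f' ->
  f %| g1 ^+ 2 + g2 ^+ 2 -> f %| g2 * g3 -> f %| g3 * g3 ->
  exists g' r, [/\ g2 = g1 * g', g' ^+ 2 = r * f' - 1 & g1 * f' %| g3].
Proof.
move=> g10 Ef H12 H23 H33.
have g1f : g1 ^+ 2 %| f by rewrite Ef dvdp_mulr.
have : g1 ^+ 2 %| g2 ^+ 2.
  by rewrite -(dvdp_addr _ (dvdpp (g1 ^+ 2))) (dvdp_trans g1f).
move/(sq_dvd _ _ g10)/dvdpP=> [g' Eg2].
have {}Eg2 : g2 = g1 * g' by rewrite Eg2 mulrC.
have g120 : g1 ^+ 2 != 0 by rewrite expf_neq0.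
have : f' %| 1 + g' ^+ 2.
  rewrite -(dvdp_mul2l _ _ g120) -Ef.
  by move: H12; rewrite Eg2 (_ : g1 ^+ 2 + (g1 * g') ^+ 2 = g1 ^+ 2 * (1 + g' ^+ 2)) //; ring.
move/dvdpP=> [r Er].
have Hg : g' ^+ 2 = r * f' - 1 by rewrite -Er; ring.
have cop : coprimep f' g'.
  apply/Bezout_coprimepP; exists (r, - g'); rewrite /= -Er.
  by rewrite (_ : 1 + g' ^+ 2 + - g' * g' = 1) ?eqpxx //; ring.
have : g1 ^+ 2 %| g3 ^+ 2 by rewrite expr2 (dvdp_trans g1f).
move/(sq_dvd _ _ g10)/dvdpP=> [t Eg3].
exists g', r; split => //.
rewrite Eg3 mulrC dvdp_mul2r //.
have : f' %| t * g'.
  rewrite -(dvdp_mul2l _ _ g120) -Ef.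
  by move: H23; rewrite Eg2 Eg3 (_ : g1 * g' * (t * g1) = g1 ^+ 2 * (t * g')) //; ring.
by rewrite Gauss_dvdpl.
Qed.
End H.
Arguments eqmod {F f x y}.

Theorem mainTheorem7 (F : finFieldType) (f g1 g2 g3 : {poly F}) :
  f \is monic ->
  (* (g1 g2; 0 g3) is the canonical generator matrix of C = code2 f g1 g2 g3 *)
  g1 \is monic -> g1 %| f -> (size g1 < size f)%N ->
  g3 \is monic -> g3 %| f -> (size g3 < size f)%N ->
  g3 %| (f %/ g1) * g2 ->
  (size g2 < size g3)%N ->
  [<-> self_dual2 f (code2 f g1 g2 g3);
       [/\ ((size g1).-1 + (size g3).-1 = (size f).-1)%N,
           (g3 * g3) %% f = 0, (g2 * g3) %% f = 0,
           (g1 ^+ 2 + g2 ^+ 2) %% f = 0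
         & g1 ^+ 2 %| f];
       exists g' f' r : {poly F},
         [/\ g' ^+ 2 = r * f' - 1, f = g1 ^+ 2 * f', g3 = g1 * f' & g2 = g1 * g']].
Proof.
move=> fm g1m g1f g1s g3m g3f g3s g3d g2s.
have f0 : f != 0 := monic_neq0 fm.
have g10 : g1 != 0 := monic_neq0 g1m.
have g30 : g3 != 0 := monic_neq0 g3m.
have inAmod : forall x, inA f (x %% f) by move=> x; rewrite /inA ltn_modp.
have inA0 : inA f 0 by rewrite /inA size_poly0 size_poly_gt0.
have f'0 : forall f', f = g1 ^+ 2 * f' -> f' != 0.
  by move=> f' Ef; apply/eqP => E; move: f0; rewrite Ef E mulr0 eqxx.
have f'm : forall f', f = g1 ^+ 2 * f' -> f' \is monic.
  by move=> f' Ef; move: fm; rewrite Ef monicMl // monic_exp.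
have H31 : (exists g' f' r : {poly F},
         [/\ g' ^+ 2 = r * f' - 1, f = g1 ^+ 2 * f', g3 = g1 * f' & g2 = g1 * g'])
     -> self_dual2 f (code2 f g1 g2 g3).
  move=> [g' [f' [r [Hg Ef Eg3 Eg2]]]]; subst g2 g3.
  have f'n := f'0 _ Ef.
  have g1f'0 : g1 * f' != 0 by rewrite mulf_neq0.
  case=> a1 a2; split.
  - move=> [Ha1 [Ha2 [u [v [/= E1 E2]]]]]; split => //; split => //.
    case=> c1 c2 [_ [_ [u' [v' [/= E1' E2']]]]] /=.
    rewrite E1 E2 E1' E2' modpD !modpMm -modpD; apply/modp_eq0P.
    rewrite Ef (_ : u * g1 * (u' * g1) + (u * (g1 * g') + v * (g1 * f')) * (u' * (g1 * g') + v' * (g1 * f'))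
       = g1 ^+ 2 * f' * (u * u' * r + u * v' * g' + v * u' * g' + v * v' * f')
         + g1 ^+ 2 * u * u' * (g' ^+ 2 - (r * f' - 1))); last by ring.
    by rewrite Hg subrr mulr0 addr0; apply: dvdp_mulr; apply: dvdpp.
  - move=> [/= Ha1 [/= Ha2 Hd]].
    have c1 : code2 f g1 (g1 * g') (g1 * f') (g1 %% f, (g1 * g') %% f).
      split; first exact: inAmod; split; first exact: inAmod.
      by exists 1, 0; rewrite !mul1r mul0r addr0.
    have c2 : code2 f g1 (g1 * g') (g1 * f') (0, (g1 * f') %% f).
      split; first exact: inA0; split; first exact: inAmod.
      by exists 0, 1; rewrite !mul0r mod0p add0r mul1r.
    move: (Hd _ c1) => /=; rewrite modpD !modp_mul -modpD => /modp_eq0P D1.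
    move: (Hd _ c2) => /=; rewrite mulr0 add0r modp_mul => /modp_eq0P D2.
    have Eff : f = g1 * (g1 * f') by rewrite Ef; ring.
    have : g1 %| a2 by rewrite -(dvdp_mul2r _ _ g1f'0) -Eff.
    move/dvdpP=> [b Ea2].
    have Eff2 : f = g1 * f' * g1 by rewrite Ef; ring.
    have D1' : g1 * f' %| a1 + b * (g1 * g').
      rewrite -(dvdp_mul2r _ _ g10) -Eff2.
      by rewrite (_ : (a1 + b * (g1 * g')) * g1 = a1 * g1 + a2 * (g1 * g')) // Ea2; ring.
    have : g1 %| a1.
      have := dvdp_trans (y:=g1 * f') (dvdp_mulr _ (dvdpp g1)) D1'.
      rewrite dvdp_addl //; apply: dvdp_mull; apply: dvdp_mulr; exact: dvdpp.
    move/dvdpP=> [a Ea1].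
    have : f' %| a + b * g'.
      rewrite -(dvdp_mul2l _ _ g10).
      by rewrite (_ : g1 * (a + b * g') = a1 + b * (g1 * g')) // Ea1; ring.
    move/dvdpP=> [w Ew].
    have Ea : a = w * f' - b * g' by rewrite -Ew; ring.
    split => //; split => //; exists a, (b * r - w * g'); split.
    + by rewrite /= -Ea1 modp_small.
    + rewrite /= (_ : a * (g1 * g') + (b * r - w * g') * (g1 * f') = a2 + g1 * b * (r * f' - 1 - g' ^+ 2)); last by rewrite Ea2 Ea; ring.
      by rewrite -Hg subrr mulr0 addr0 modp_small.
have H32 : (exists g' f' r : {poly F},
         [/\ g' ^+ 2 = r * f' - 1, f = g1 ^+ 2 * f', g3 = g1 * f' & g2 = g1 * g'])
     -> [/\ ((size g1).-1 + (size g3).-1 = (size f).-1)%N,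
           (g3 * g3) %% f = 0, (g2 * g3) %% f = 0,
           (g1 ^+ 2 + g2 ^+ 2) %% f = 0
         & g1 ^+ 2 %| f].
  move=> [g' [f' [r [Hg Ef Eg3 Eg2]]]]; subst g2 g3.
  have f'n := f'0 _ Ef.
  have s1 := size_poly_gt0 g1; have s2 := size_poly_gt0 f'.
  rewrite g10 in s1; rewrite f'n in s2.
  split.
  - rewrite Ef expr2 !size_mul ?mulf_neq0 //; move: s1 s2; case: (size g1) => // a; case: (size f') => // b _ _; rewrite !addSn !addnS /=; lia.
  - apply/modp_eq0P; rewrite Ef (_ : g1 * f' * (g1 * f') = g1 ^+ 2 * f' * f'); last by ring.
    by apply: dvdp_mulr; apply: dvdpp.
  - apply/modp_eq0P; rewrite Ef (_ : g1 * g' * (g1 * f') = g1 ^+ 2 * f' * g'); last by ring.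
    by apply: dvdp_mulr; apply: dvdpp.
  - apply/modp_eq0P; rewrite Ef (_ : g1 ^+ 2 + (g1 * g') ^+ 2 = g1 ^+ 2 * f' * r + g1 ^+ 2 * (g' ^+ 2 - (r * f' - 1))); last by ring.
    by rewrite Hg subrr mulr0 addr0; apply: dvdp_mulr; apply: dvdpp.
  - by rewrite Ef; apply: dvdp_mulr; apply: dvdpp.
have H23 : [/\ ((size g1).-1 + (size g3).-1 = (size f).-1)%N,
           (g3 * g3) %% f = 0, (g2 * g3) %% f = 0,
           (g1 ^+ 2 + g2 ^+ 2) %% f = 0
         & g1 ^+ 2 %| f] -> (exists g' f' r : {poly F},
         [/\ g' ^+ 2 = r * f' - 1, f = g1 ^+ 2 * f', g3 = g1 * f' & g2 = g1 * g']).
  move=> [Hdeg H33 H23 H12 H1f].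
  have [f' Ef] : exists f', f = g1 ^+ 2 * f' by exists (f %/ g1 ^+ 2); rewrite divpKC.
  have f'n := f'0 _ Ef.
  have [g' [r [Eg2 Hg Hd]]] := @core _ _ _ _ _ _ g10 Ef (introT (modp_eq0P _ _) H12)
    (introT (modp_eq0P _ _) H23) (introT (modp_eq0P _ _) H33).
  exists g', f', r; split => //.
  apply/eqP; rewrite eq_sym -eqp_monic ?monicMl ?(f'm _ Ef) //.
  rewrite -dvdp_size_eqp // size_mul //.
  have s1 := size_poly_gt0 g1; have s2 := size_poly_gt0 f'; have s3 := size_poly_gt0 g3.
  rewrite g10 in s1; rewrite f'n in s2; rewrite g30 in s3.
  move: Hdeg; rewrite Ef expr2 !size_mul ?mulf_neq0 //.
  move: s1 s2 s3; case: (size g1) => // a; case: (size f') => // b; case: (size g3) => // c _ _ _.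
  rewrite !addSn !addnS /= => H; apply/eqP; lia.
have H13 : self_dual2 f (code2 f g1 g2 g3) -> (exists g' f' r : {poly F},
         [/\ g' ^+ 2 = r * f' - 1, f = g1 ^+ 2 * f', g3 = g1 * f' & g2 = g1 * g']).
  move=> Hsd.
  have c1 : code2 f g1 g2 g3 (g1 %% f, g2 %% f).
    split; first exact: inAmod; split; first exact: inAmod.
    by exists 1, 0; rewrite !mul1r mul0r addr0.
  have c2 : code2 f g1 g2 g3 (0, g3 %% f).
    split; first exact: inA0; split; first exact: inAmod.
    by exists 0, 1; rewrite !mul0r mod0p add0r mul1r.
  have [_ [_ D1]] := (Hsd _).1 c1.
  have [_ [_ D2]] := (Hsd _).1 c2.
  have K12 : f %| g1 ^+ 2 + g2 ^+ 2.
    by move: (D1 _ c1) => /=; rewrite modpD !modpMm -modpD -!expr2 => /modp_eq0P.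
  have K23 : f %| g2 * g3.
    by move: (D1 _ c2) => /=; rewrite mulr0 add0r modpMm => /modp_eq0P.
  have K33 : f %| g3 * g3.
    by move: (D2 _ c2) => /=; rewrite mulr0 add0r modpMm => /modp_eq0P.
  have d3 : dual2 f (code2 f g1 g2 g3) ((f %/ g1) %% f, 0).
    split; first exact: inAmod; split; first exact: inA0.
    case=> c1' c2' [_ [_ [u [v [/= E1 E2]]]]] /=.
    by rewrite E1 mul0r addr0 modpMm mulrCA divpK // modp_mull.
  have [_ [_ [u [v [/= E1 _]]]]] := (Hsd _).2 d3.
  have g1k : g1 %| f %/ g1.
    rewrite -(dvdp_subl _ (dvdp_mull u (dvdpp g1))).
    exact: (dvdp_trans (y:=f) g1f (eqmod E1)).
  have g1sq : g1 ^+ 2 %| f.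
    move/dvdpP: g1k => [k Ek]; rewrite -(divpK g1f) Ek -mulrA -expr2.
    by apply: dvdp_mull; apply: dvdpp.
  have [f' Ef] : exists f', f = g1 ^+ 2 * f' by exists (f %/ g1 ^+ 2); rewrite divpKC.
  have f'n := f'0 _ Ef.
  have [g' [r [Eg2 Hg Hd]]] := @core _ _ _ _ _ _ g10 Ef K12 K23 K33.
  have d4 : dual2 f (code2 f g1 g2 g3) (0, (g1 * f') %% f).
    split; first exact: inA0; split; first exact: inAmod.
    case=> c1' c2' [_ [_ [u' [v' [/= E1' E2']]]]] /=.
    rewrite E2' mul0r add0r modpMm; apply/modp_eq0P.
    move/dvdpP: Hd => [t Et].
    rewrite Eg2 Et Ef (_ : g1 * f' * (u' * (g1 * g') + v' * (t * (g1 * f'))) =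
       g1 ^+ 2 * f' * (u' * g' + v' * t * f')); last by ring.
    by apply: dvdp_mulr; apply: dvdpp.
  have [_ [_ [u2 [v2 [/= E3 E4]]]]] := (Hsd _).2 d4.
  have Eff : f = g1 * f' * g1 by rewrite Ef; ring.
  have : g1 * f' %| u2.
    rewrite -(dvdp_mul2r _ _ g10) -Eff; apply/modp_eq0P; by rewrite -E3.
  move/dvdpP=> [s Es].
  have Hg3 : g3 %| g1 * f'.
    have := dvdp_trans (y:=f) g3f (eqmod E4).
    rewrite dvdp_subl //; apply: dvdp_add.
      rewrite Es Eg2 (_ : s * (g1 * f') * (g1 * g') = s * g' * f); last by rewrite Ef; ring.
      exact: dvdp_mull.
    by apply: dvdp_mull; apply: dvdpp.
  exists g', f', r; split => //.
  apply/eqP; rewrite -eqp_monic ?monicMl ?(f'm _ Ef) //.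
  by rewrite /eqp Hd Hg3.
tfae.
- by move=> /H13/H32.
- exact: H23.
- exact: H31.
Qed.
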